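(* Let $\mathbb M$ be an $\mathcal R$-module. Then $\mathbb M$ is dually separated if and only if for every commutative $R$-algebra $S$ the natural map $$\mathbb M^*(S)\to\operatorname{Hom}_S(\mathbb M(S),S),\qquad w\mapsto w_S,$$ is injective.
   Context: $R$ is a commutative ring. An $\mathcal R$-module is a covariant functor $\mathbb M$ from commutative $R$-algebras to abelian groups with each $\mathbb M(S)$ an $S$-module, functorially; morphisms are natural transformations that are $S$-linear on each $S$. For an $R$-algebra $S$, $\mathcal S$ denotes the functor $T\mapsto T$ on $S$-algebras, $\mathbb M_{|S}$ the restriction of $\mathbb M$ to commutative $S$-algebras, and $\mathbb M^*(S)=\operatorname{Hom}_{\mathcal S}(\mathbb M_{|S},\mathcal S)$. $\mathbb M$ is dually separated if for every commutative $R$-algebra $S$ the map $\mathbb M^*(S)\to\operatorname{Hom}_R(\mathbb M(R),S)$, $w\mapsto w_R$, is injective. *)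

(* Defs.v *)
From HB Require Import structures.
From mathcomp Require Import all_boot all_order all_algebra.
Set Implicit Arguments. Unset Strict Implicit. Unset Printing Implicit Defensive.
Import GRing.Theory.
Local Open Scope ring_scope.

Definition rhom (A B : pzRingType) (f : A -> B) : Prop :=
  [/\ forall x y, f (x + y) = f x + f y,
      forall x y, f (x * y) = f x * f y & f 1 = 1].

(* a commutative R-algebra: a commutative ring with a structure ring map from R
   (the zero ring is allowed, and R may be the zero ring) *)
Record calg (R : comPzRingType) := CAlg {
  ca_sort :> comPzRingType;
  ca_str : R -> ca_sort;
  ca_strP : rhom ca_str }.

Definition alg_hom (R : comPzRingType) (S T : calg R) (f : S -> T) : Prop :=
  rhom f /\ forall r : R, f (ca_str S r) = ca_str T r.

Lemma rhom_id (R : comPzRingType) : rhom (fun x : R => x).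
Proof. by split. Qed.
Definition base_alg (R : comPzRingType) : calg R := CAlg (@rhom_id R).

Lemma alg_hom_id (R : comPzRingType) (S : calg R) : alg_hom (fun x : S => x).
Proof. by split => //; split. Qed.

Lemma alg_hom_str (R : comPzRingType) (S : calg R) :
  @alg_hom R (base_alg R) S (ca_str S).
Proof. by split => //; exact: ca_strP. Qed.

Record RMod (R : comPzRingType) := {
  Mobj : forall S : calg R, lmodType S;
  Mmap : forall (S T : calg R) (f : S -> T), alg_hom f -> Mobj S -> Mobj T;
  Mmap_semilin : forall (S T : calg R) (f : S -> T) (hf : alg_hom f)
      (s : S) (m m' : Mobj S),
      Mmap hf (s *: m + m') = f s *: Mmap hf m + Mmap hf m';
  Mmap_id : forall (S : calg R) (f : S -> S) (hf : alg_hom f) (m : Mobj S),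
      (forall x, f x = x) -> Mmap hf m = m;
  Mmap_comp : forall (S T U : calg R) (f : S -> T) (g : T -> U) (h : S -> U)
      (hf : alg_hom f) (hg : alg_hom g) (hh : alg_hom h) (m : Mobj S),
      (forall x, h x = g (f x)) -> Mmap hh m = Mmap hg (Mmap hf m) }.

(* M^*(S) = Hom_{S}(M_{|S}, S-cal): an S-algebra is an R-algebra T together
   with an R-algebra map j : S -> T; a morphism of S-algebras is an
   R-algebra map commuting with the structure maps. *)
Record dualM (R : comPzRingType) (M : RMod R) (S : calg R) := {
  dw : forall (T : calg R) (j : S -> T), alg_hom j -> Mobj M T -> T;
  dw_lin : forall (T : calg R) (j : S -> T) (hj : alg_hom j) (t : T)
      (m m' : Mobj M T), dw hj (t *: m + m') = t * dw hj m + dw hj m';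
  dw_nat : forall (T T' : calg R) (j : S -> T) (j' : S -> T')
      (hj : alg_hom j) (hj' : alg_hom j') (g : T -> T') (hg : alg_hom g),
      (forall s, g (j s) = j' s) ->
      forall m : Mobj M T, dw hj' (@Mmap R M _ _ _ hg m) = g (dw hj m) }.

Definition dual_eq (R : comPzRingType) (M : RMod R) (S : calg R)
    (w w' : dualM M S) : Prop :=
  forall (T : calg R) (j : S -> T) (hj : alg_hom j) (m : Mobj M T),
    dw w hj m = dw w' hj m.

Definition w_S (R : comPzRingType) (M : RMod R) (S : calg R) (w : dualM M S)
    : Mobj M S -> S := dw w (alg_hom_id S).

(* w_R : M(R) -> S, the R-component under M^*(S) = Hom_R(M, S (x)_R -) *)
Definition w_R (R : comPzRingType) (M : RMod R) (S : calg R) (w : dualM M S)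
    : Mobj M (base_alg R) -> S :=
  fun m => w_S w (@Mmap R M _ _ _ (alg_hom_str S) m).

Definition dually_separated (R : comPzRingType) (M : RMod R) : Prop :=
  forall (S : calg R) (w w' : dualM M S),
    (forall m, w_R w m = w_R w' m) -> dual_eq w w'.

(* Main.v *)
From HB Require Import structures.
Require Import Defs.
From mathcomp Require Import all_boot all_order all_algebra ring.
From Stdlib Require Import ClassicalEpsilon.
Set Implicit Arguments. Unset Strict Implicit. Unset Printing Implicit Defensive.
Import GRing.Theory.
Local Open Scope ring_scope.
Local Open Scope quotient_scope.

Record rmap (A B : comPzRingType) := RMap { rm :> A -> B; rmP : rhom rm }.

Section Triv.
Variables (A B : comPzRingType) (h : rmap A B).
Definition trivT (_ : rmap A B) : Type := (A * B)%type.
Notation triv := (trivT h).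
HB.instance Definition _ := Choice.copy triv (A * B)%type.
Definition tzero : triv := (0, 0).
Definition topp (x : triv) : triv := (- x.1, - x.2).
Definition tadd (x y : triv) : triv := (x.1 + y.1, x.2 + y.2).
Lemma taddA : associative tadd.
Proof. by move=> [a b] [c d] [e f]; rewrite /tadd /= !addrA. Qed.
Lemma taddC : commutative tadd.
Proof. by move=> [a b] [c d]; rewrite /tadd /= addrC [d + _]addrC. Qed.
Lemma tadd0 : left_id tzero tadd.
Proof. by move=> [a b]; rewrite /tadd /= !add0r. Qed.
Lemma taddN : left_inverse tzero topp tadd.
Proof. by move=> [a b]; rewrite /tadd /= !addNr. Qed.
HB.instance Definition _ := GRing.isZmodule.Build triv taddA taddC tadd0 taddN.
Definition tone : triv := (1, 0).
Definition tmul (x y : triv) : triv := (x.1 * y.1, h x.1 * y.2 + h y.1 * x.2).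
Lemma hD x y : h (x + y) = h x + h y. Proof. by case: (rmP h). Qed.
Lemma hM x y : h (x * y) = h x * h y. Proof. by case: (rmP h). Qed.
Lemma h1 : h 1 = 1. Proof. by case: (rmP h). Qed.
Lemma tmulA : associative tmul.
Proof. move=> [a b] [c d] [e f]; rewrite /tmul /= !hM !mulrA; congr (_, _); ring. Qed.
Lemma tmulC : commutative tmul.
Proof. by move=> [a b] [c d]; rewrite /tmul /= mulrC addrC. Qed.
Lemma tmul1 : left_id tone tmul.
Proof. by move=> [a b]; rewrite /tmul /= mul1r h1 mul1r mulr0 addr0. Qed.
Lemma tmulDl : left_distributive tmul tadd.
Proof. move=> [a b] [c d] [e f]; rewrite /tmul /tadd /= mulrDl hD; congr (_, _); ring. Qed.
HB.instance Definition _ := GRing.Zmodule_isComPzRing.Build triv tmulA tmulC tmul1 tmulDl.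
Lemma trivE (x y : triv) : x * y = (x.1 * y.1, h x.1 * y.2 + h y.1 * x.2). Proof. by []. Qed.
Lemma trivD (x y : triv) : x + y = (x.1 + y.1, x.2 + y.2). Proof. by []. Qed.
End Triv.

Section Tensor.
Variables (R : comPzRingType) (S T : calg R).
Definition PT := seq (S * T)%type.
Definition bal (V : zmodType) (f : S -> T -> V) : Prop :=
  [/\ forall s s' t, f (s + s') t = f s t + f s' t,
      forall s t t', f s (t + t') = f s t + f s t' &
      forall r s t, f (s * ca_str S r) t = f s (ca_str T r * t)].
Definition ev (V : zmodType) (f : S -> T -> V) (x : PT) : V :=
  \sum_(p <- x) f p.1 p.2.
Definition teq (x y : PT) : Prop :=
  forall (V : zmodType) (f : S -> T -> V), bal f -> ev f x = ev f y.
Definition teqb (x y : PT) : bool :=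
  if excluded_middle_informative (teq x y) then true else false.
Lemma teqbP x y : reflect (teq x y) (teqb x y).
Proof. rewrite /teqb; case: excluded_middle_informative => h; by constructor. Qed.
Lemma teqb_refl : reflexive teqb. Proof. by move=> x; apply/teqbP. Qed.
Lemma teqb_sym : symmetric teqb.
Proof. move=> x y; apply/teqbP/teqbP => h V f hf; by rewrite h. Qed.
Lemma teqb_trans : transitive teqb.
Proof. move=> y x z /teqbP h1 /teqbP h2; apply/teqbP => V f hf; by rewrite h1 // h2. Qed.
Canonical teq_rel := EquivRel teqb teqb_refl teqb_sym teqb_trans.
Definition tens := {eq_quot teq_rel}.
HB.instance Definition _ := Choice.on tens.
Definition tpi (x : PT) : tens := \pi_tens x.
Lemma tpiP x y : tpi x = tpi y <-> teq x y.
Proof. split; [by move/eqquotP/teqbP | by move=> h; apply/eqquotP/teqbP]. Qed.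
Lemma treprK (u : tens) : tpi (repr u) = u. Proof. exact: reprK. Qed.
Lemma ev_repr (V : zmodType) (f : S -> T -> V) (x : PT) : bal f -> ev f (repr (tpi x)) = ev f x.
Proof. move=> hf; have /tpiP h := treprK (tpi x); exact: h. Qed.
Section Bal.
Variables (V : zmodType) (f : S -> T -> V) (hf : bal f).
Lemma bal_Dl s s' t : f (s + s') t = f s t + f s' t. Proof. by case: hf. Qed.
Lemma bal_Dr s t t' : f s (t + t') = f s t + f s t'. Proof. by case: hf. Qed.
Lemma bal_str r s t : f (s * ca_str S r) t = f s (ca_str T r * t). Proof. by case: hf. Qed.
Lemma bal_0l t : f 0 t = 0.
Proof. have h := bal_Dl 0 0 t; rewrite addr0 in h.
by have := congr1 (fun z => z - f 0 t) h; rewrite /= subrr addrK => /esym. Qed.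
Lemma bal_Nl s t : f (- s) t = - f s t.
Proof. have h := bal_Dl (- s) s t; rewrite addNr bal_0l in h.
by apply/eqP; rewrite -subr_eq0 opprK -h. Qed.
End Bal.
Definition popp (x : PT) : PT := map (fun p => (- p.1, p.2)) x.
Definition pmul (x y : PT) : PT := [seq (p.1 * q.1, p.2 * q.2) | p <- x, q <- y].
Definition pone : PT := [:: (1, 1)].
Lemma ev_cat (V : zmodType) (f : S -> T -> V) x y : ev f (x ++ y) = ev f x + ev f y.
Proof. by rewrite /ev big_cat. Qed.
Lemma ev_nil (V : zmodType) (f : S -> T -> V) : ev f [::] = 0.
Proof. by rewrite /ev big_nil. Qed.
Lemma ev_opp (V : zmodType) (f : S -> T -> V) x : bal f -> ev f (popp x) = - ev f x.
Proof. move=> hf; rewrite /ev big_map -sumrN; apply: eq_bigr => p _; exact: bal_Nl. Qed.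
Lemma ev_mul (V : zmodType) (f : S -> T -> V) x y :
  ev f (pmul x y) = \sum_(p <- x) \sum_(q <- y) f (p.1 * q.1) (p.2 * q.2).
Proof. by rewrite /ev /pmul big_allpairs_dep. Qed.
Lemma ev_one (V : zmodType) (f : S -> T -> V) : ev f pone = f 1 1.
Proof. by rewrite /ev big_seq1. Qed.
Definition mulf (V : zmodType) (f : S -> T -> V) (y : PT) : S -> T -> V :=
  fun s t => \sum_(q <- y) f (s * q.1) (t * q.2).
Definition mulf' (V : zmodType) (f : S -> T -> V) (x : PT) : S -> T -> V :=
  fun s t => \sum_(p <- x) f (p.1 * s) (p.2 * t).
Lemma bal_mulf (V : zmodType) (f : S -> T -> V) y : bal f -> bal (mulf f y).
Proof.
move=> hf; split.
- by move=> s s' t; rewrite /mulf -big_split; apply: eq_bigr => q _; rewrite mulrDl bal_Dl.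
- by move=> s t t'; rewrite /mulf -big_split; apply: eq_bigr => q _; rewrite mulrDl bal_Dr.
- move=> r s t; rewrite /mulf; apply: eq_bigr => q _.
  by rewrite mulrAC bal_str // mulrA.
Qed.
Lemma bal_mulf' (V : zmodType) (f : S -> T -> V) x : bal f -> bal (mulf' f x).
Proof.
move=> hf; split.
- by move=> s s' t; rewrite /mulf' -big_split; apply: eq_bigr => q _; rewrite mulrDr bal_Dl.
- by move=> s t t'; rewrite /mulf' -big_split; apply: eq_bigr => q _; rewrite mulrDr bal_Dr.
- move=> r s t; rewrite /mulf'; apply: eq_bigr => q _.
  by rewrite mulrA bal_str // mulrCA.
Qed.
Lemma ev_mulL (V : zmodType) (f : S -> T -> V) x y : ev f (pmul x y) = ev (mulf f y) x.
Proof. by rewrite ev_mul. Qed.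
Lemma ev_mulR (V : zmodType) (f : S -> T -> V) x y : ev f (pmul x y) = ev (mulf' f x) y.
Proof. by rewrite ev_mul /ev /mulf' exchange_big. Qed.

Definition qzero : tens := tpi [::].
Definition qone : tens := tpi pone.
Definition qadd (u v : tens) : tens := tpi (repr u ++ repr v).
Definition qopp (u : tens) : tens := tpi (popp (repr u)).
Definition qmul (u v : tens) : tens := tpi (pmul (repr u) (repr v)).
Lemma qaddE x y : qadd (tpi x) (tpi y) = tpi (x ++ y).
Proof. by apply/tpiP => V f hf; rewrite !ev_cat !ev_repr. Qed.
Lemma qoppE x : qopp (tpi x) = tpi (popp x).
Proof. by apply/tpiP => V f hf; rewrite !ev_opp // ev_repr. Qed.
Lemma qmulE x y : qmul (tpi x) (tpi y) = tpi (pmul x y).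
Proof.
apply/tpiP => V f hf; rewrite ev_mulL ev_repr; last exact: bal_mulf.
rewrite -ev_mulL ev_mulR ev_repr; last exact: bal_mulf'.
by rewrite -ev_mulR.
Qed.
Lemma tens_ind (P : tens -> Prop) : (forall x, P (tpi x)) -> forall u, P u.
Proof. by move=> h u; rewrite -(treprK u). Qed.

Lemma qaddA : associative qadd.
Proof. by elim/tens_ind=> x; elim/tens_ind=> y; elim/tens_ind=> z; rewrite !qaddE catA. Qed.
Lemma qaddC : commutative qadd.
Proof. elim/tens_ind=> x; elim/tens_ind=> y; rewrite !qaddE; apply/tpiP => V f hf.
by rewrite !ev_cat addrC. Qed.
Lemma qadd0 : left_id qzero qadd.
Proof. by elim/tens_ind=> x; rewrite qaddE. Qed.
Lemma qaddN : left_inverse qzero qopp qadd.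
Proof. elim/tens_ind=> x; rewrite qoppE qaddE; apply/tpiP => V f hf.
by rewrite ev_cat ev_opp // addNr ev_nil. Qed.
HB.instance Definition _ := GRing.isZmodule.Build tens qaddA qaddC qadd0 qaddN.
Lemma qmulA : associative qmul.
Proof.
elim/tens_ind=> x; elim/tens_ind=> y; elim/tens_ind=> z; rewrite !qmulE; apply/tpiP => V f hf.
rewrite !ev_mul big_allpairs_dep; apply: eq_bigr => p _; rewrite big_allpairs_dep.
apply: eq_bigr => q _; apply: eq_bigr => r _ /=; by rewrite !mulrA.
Qed.
Lemma qmulC : commutative qmul.
Proof.
elim/tens_ind=> x; elim/tens_ind=> y; rewrite !qmulE; apply/tpiP => V f hf.
rewrite !ev_mul exchange_big; apply: eq_bigr => p _; apply: eq_bigr => q _.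
by rewrite mulrC [p.2 * _]mulrC.
Qed.
Lemma qmul1 : left_id qone qmul.
Proof.
elim/tens_ind=> x; rewrite /qone qmulE; apply/tpiP => V f hf.
by rewrite ev_mul big_seq1; apply: eq_bigr => p _; rewrite !mul1r.
Qed.
Lemma qmulDl : left_distributive qmul qadd.
Proof.
elim/tens_ind=> x; elim/tens_ind=> y; elim/tens_ind=> z.
rewrite qaddE !qmulE qaddE; apply/tpiP => V f hf.
by rewrite ev_cat !ev_mul big_cat.
Qed.
HB.instance Definition _ := GRing.Zmodule_isComPzRing.Build tens qmulA qmulC qmul1 qmulDl.
Lemma tpi_add x y : tpi x + tpi y = tpi (x ++ y). Proof. exact: qaddE. Qed.
Lemma tpi_mul x y : tpi x * tpi y = tpi (pmul x y). Proof. exact: qmulE. Qed.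
Lemma tpi_one : 1 = tpi pone :> tens. Proof. by []. Qed.
Lemma tpi_zero : 0 = tpi [::] :> tens. Proof. by []. Qed.
Lemma tpi_cons p x : tpi (p :: x) = tpi [:: p] + tpi x. Proof. by rewrite tpi_add. Qed.

Definition tlift (V : zmodType) (f : S -> T -> V) (u : tens) : V := ev f (repr u).
Lemma tlift_pi (V : zmodType) (f : S -> T -> V) x : bal f -> tlift f (tpi x) = ev f x.
Proof. exact: ev_repr. Qed.
Lemma tliftD (V : zmodType) (f : S -> T -> V) u v : bal f -> tlift f (u + v) = tlift f u + tlift f v.
Proof.
move=> hf; move: u v; elim/tens_ind=> x; elim/tens_ind=> y.
by rewrite tpi_add !tlift_pi // ev_cat.
Qed.
Lemma tlift0 (V : zmodType) (f : S -> T -> V) : bal f -> tlift f 0 = 0.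
Proof. by move=> hf; rewrite tpi_zero tlift_pi // ev_nil. Qed.
Lemma tlift_comp (V W : zmodType) (f : S -> T -> V) (h : V -> W) u :
  h 0 = 0 -> (forall a b, h (a + b) = h a + h b) ->
  tlift (fun s t => h (f s t)) u = h (tlift f u).
Proof.
move=> h0 hD; rewrite /tlift /ev; elim: (repr u) => [|p r IH]; first by rewrite !big_nil.
by rewrite !big_cons IH hD.
Qed.
End Tensor.
Section RhomLemmas.
Variables (A B : comPzRingType) (g : A -> B) (hg : rhom g).
Lemma rhD x y : g (x + y) = g x + g y. Proof. by case: hg. Qed.
Lemma rhM x y : g (x * y) = g x * g y. Proof. by case: hg. Qed.
Lemma rh1 : g 1 = 1. Proof. by case: hg. Qed.
Lemma rh0 : g 0 = 0.
Proof. have h := rhD 0 0; rewrite addr0 in h.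
by have := congr1 (fun z => z - g 0) h; rewrite /= subrr addrK => /esym. Qed.
Lemma rh_sum (I : Type) (r : seq I) (F : I -> A) : g (\sum_(i <- r) F i) = \sum_(i <- r) g (F i).
Proof. elim: r => [|i r IH]; first by rewrite !big_nil rh0. by rewrite !big_cons rhD IH. Qed.
End RhomLemmas.

Ltac evs := rewrite /ev /pmul /= ?big_cons ?big_nil ?addr0 /=.
Section TensorAlg.
Variables (R : comPzRingType) (S T : calg R).
Notation tens := (tens S T).
Notation tpi := (@tpi R S T).
Definition tstr (r : R) : tens := tpi [:: (ca_str S r, 1)].
Definition kappa (s : S) : tens := tpi [:: (s, 1)].
Definition iota (t : T) : tens := tpi [:: (1, t)].
Lemma rhom_tstr : rhom tstr.
Proof.
have hS := ca_strP S; split.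
- move=> x y; rewrite /tstr tpi_add; apply/tpiP => V f hf.
  by evs; rewrite (rhD hS) bal_Dl.
- move=> x y; rewrite /tstr tpi_mul; apply/tpiP => V f hf.
  by evs; rewrite (rhM hS) mulr1.
- rewrite /tstr tpi_one; apply/tpiP => V f hf.
  by evs; rewrite (rh1 hS).
Qed.
Definition tensA : calg R := CAlg rhom_tstr.
Lemma rhom_kappa : rhom (kappa : S -> tensA).
Proof.
split.
- move=> x y; rewrite /kappa /= tpi_add; apply/tpiP => V f hf.
  by evs; rewrite bal_Dl.
- move=> x y; rewrite /kappa /= tpi_mul; apply/tpiP => V f hf.
  by evs; rewrite mulr1.
- by rewrite /kappa /= tpi_one.
Qed.
Lemma kappa_alg : @alg_hom R S tensA kappa.
Proof. by split; [exact: rhom_kappa | ]. Qed.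
Lemma rhom_iota : rhom (iota : T -> tensA).
Proof.
split.
- move=> x y; rewrite /iota /= tpi_add; apply/tpiP => V f hf.
  by evs; rewrite bal_Dr.
- move=> x y; rewrite /iota /= tpi_mul; apply/tpiP => V f hf.
  by evs; rewrite mulr1.
- by rewrite /iota /= tpi_one.
Qed.
Lemma iota_alg : @alg_hom R T tensA iota.
Proof.
split; first exact: rhom_iota.
move=> r; rewrite /iota /= /tstr; apply/tpiP => V f hf.
by evs; rewrite -[ca_str S r]mul1r bal_str // mulr1.
Qed.
Lemma kappa_iota s t : kappa s * iota t = tpi [:: (s, t)].
Proof. by rewrite /kappa /iota tpi_mul /pmul /= mulr1 mul1r. Qed.
Lemma tlift_iota (V : zmodType) (f : S -> T -> V) t u : bal f ->
  tlift f (iota t * u) = tlift (fun s t' => f s (t * t')) u.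
Proof.
move=> hf; move: u; elim/tens_ind=> x; rewrite /iota tpi_mul tlift_pi // tlift_pi.
  by rewrite ev_mul big_seq1 /=; apply: eq_bigr => p _; rewrite mul1r.
split.
- by move=> s s' t'; rewrite bal_Dl.
- by move=> s t1 t2; rewrite mulrDr bal_Dr.
- by move=> r s t'; rewrite bal_str // mulrCA.
Qed.
End TensorAlg.
Section Univ.
Variables (R : comPzRingType) (S T W : calg R) (a : S -> W) (b : T -> W).
Hypotheses (ha : alg_hom a) (hb : alg_hom b).
Definition ufun (s : S) (t : T) : W := a s * b t.
Lemma bal_ufun : bal ufun.
Proof.
case: ha => ra sa; case: hb => rb sb; split.
- by move=> s s' t; rewrite /ufun (rhD ra) mulrDl.
- by move=> s t t'; rewrite /ufun (rhD rb) mulrDr.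
- by move=> r s t; rewrite /ufun (rhM ra) (rhM rb) sa sb mulrA.
Qed.
Definition ulift : tensA S T -> W := tlift ufun.
Lemma ulift_pi x : ulift (tpi x) = ev ufun x.
Proof. exact: tlift_pi bal_ufun. Qed.
Lemma ulift_alg : alg_hom ulift.
Proof.
case: ha => ra sa; case: hb => rb sb.
split; first split.
- by move=> u v; apply: tliftD bal_ufun.
- elim/tens_ind=> x; elim/tens_ind=> y; rewrite tpi_mul !ulift_pi ev_mul /ev big_distrl.
  apply: eq_bigr => p _; rewrite big_distrr; apply: eq_bigr => q _.
  by rewrite /ufun (rhM ra) (rhM rb) /=; ring.
- by rewrite /= tpi_one ulift_pi /ev big_seq1 /ufun (rh1 ra) (rh1 rb) mulr1.
- by move=> r; rewrite /= /tstr ulift_pi /ev big_seq1 /ufun sa (rh1 rb) mulr1.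
Qed.
Lemma ulift_kappa s : ulift (@kappa R S T s) = a s.
Proof. case: hb => rb _; by rewrite /kappa ulift_pi /ev big_seq1 /ufun /= (rh1 rb) mulr1. Qed.
Lemma ulift_iota t : ulift (@iota R S T t) = b t.
Proof. case: ha => ra _; by rewrite /iota ulift_pi /ev big_seq1 /ufun /= (rh1 ra) mul1r. Qed.
End Univ.

Section TrivAlg.
Variables (R : comPzRingType) (A B : comPzRingType) (h : rmap A B) (st : R -> A).
Hypothesis hst : rhom st.
Definition tstr2 (r : R) : trivT h := (st r, 0).
Lemma rhom_tstr2 : rhom tstr2.
Proof.
split.
- by move=> x y; rewrite /tstr2 trivD /= (rhD hst) addr0.
- by move=> x y; rewrite /tstr2 trivE /= (rhM hst) !mulr0 addr0.
- by rewrite /tstr2 (rh1 hst).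
Qed.
Definition trivA : calg R := CAlg rhom_tstr2.
End TrivAlg.

Lemma alg_hom_comp (R : comPzRingType) (A B C : calg R) (f : A -> B) (g : B -> C) :
  alg_hom f -> alg_hom g -> alg_hom (fun x => g (f x)).
Proof.
move=> [hf sf] [hg sg]; split; last by move=> r; rewrite sf sg.
split.
- by move=> x y; rewrite (rhD hf) (rhD hg).
- by move=> x y; rewrite (rhM hf) (rhM hg).
- by rewrite (rh1 hf) (rh1 hg).
Qed.

Lemma tlift_ext (R : comPzRingType) (S T : calg R) (V : zmodType) (f g : S -> T -> V) u :
  (forall s t, f s t = g s t) -> tlift f u = tlift g u.
Proof. by move=> e; rewrite /tlift /ev; apply: eq_bigr => p _; rewrite e. Qed.

Lemma tens_ext (R : comPzRingType) (S T : calg R) (V : zmodType) (F1 F2 : tens S T -> V) :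
  F1 0 = 0 -> F2 0 = 0 ->
  (forall u v, F1 (u + v) = F1 u + F1 v) -> (forall u v, F2 (u + v) = F2 u + F2 v) ->
  (forall s t, F1 (tpi [:: (s, t)]) = F2 (tpi [:: (s, t)])) -> forall u, F1 u = F2 u.
Proof.
move=> z1 z2 d1 d2 e; elim/tens_ind=> x; elim: x => [|p x IH]; first by rewrite -tpi_zero z1 z2.
by rewrite tpi_cons d1 d2 IH; case: p => s t; rewrite e.
Qed.

Section Main.
Variables (R : comPzRingType) (M : RMod R) (S : calg R).
Definition hS : rmap R S := RMap (ca_strP S).
Definition Sp : calg R := @trivA R R S hS (fun x => x) (rhom_id R).
Definition pf (T' : calg R) (j' : Sp -> T') (s : S) (t : T') : T' :=
  j' ((0, s) : trivT hS) * t.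
Lemma bal_pf (T' : calg R) (j' : Sp -> T') : alg_hom j' -> bal (pf j').
Proof.
move=> [hj sj]; split.
- move=> s s' t; have e : ((0, s + s') : trivT hS) = (0, s) + (0, s').
    by rewrite trivD /= addr0.
  by rewrite /pf e (rhD hj) mulrDl.
- by move=> s t t'; rewrite /pf mulrDr.
- move=> r s t; have e : ((0, s * ca_str S r) : trivT hS) = ((r, 0) : trivT hS) * (0, s).
    by rewrite trivE /= !mulr0 addr0 mulrC.
  have e2 : j' ((r, 0) : trivT hS) = ca_str T' r := sj r.
  by rewrite /pf e (rhM hj) e2 -mulrA mulrCA.
Qed.
Section Psi.
Variable (w : dualM M S).
Definition psif (T' : calg R) (j' : Sp -> T') (hj' : alg_hom j') (m : Mobj M T') : T' :=
  tlift (pf j') (dw w (kappa_alg S T') (Mmap (iota_alg S T') m)).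
Lemma psif_lin (T' : calg R) (j' : Sp -> T') (hj : alg_hom j') (t : T') (m m' : Mobj M T') :
  psif hj (t *: m + m') = t * psif hj m + psif hj m'.
Proof.
rewrite /psif Mmap_semilin dw_lin tliftD; last exact: bal_pf.
rewrite tlift_iota; last exact: bal_pf.
congr (_ + _).
rewrite (@tlift_ext _ _ _ _ _ (fun s t' => t * pf j' s t')); last first.
  by move=> s t'; rewrite /pf mulrCA.
by apply: tlift_comp; [rewrite mulr0 | move=> a b; rewrite mulrDr].
Qed.
Lemma psif_nat (T' T'' : calg R) (j' : Sp -> T') (j'' : Sp -> T'')
  (hj' : alg_hom j') (hj'' : alg_hom j'') (g : T' -> T'') (hg : alg_hom g) :
  (forall s, g (j' s) = j'' s) ->
  forall m : Mobj M T', psif hj'' (Mmap hg m) = g (psif hj' m).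
Proof.
move=> Hc m.
pose G := @ulift R S T' (tensA S T'') (@kappa R S T'') (fun t => @iota R S T'' (g t)).
have hbG : @alg_hom R T' (tensA S T'') (fun t => @iota R S T'' (g t)) := alg_hom_comp hg (iota_alg S T'').
have hG : @alg_hom R (tensA S T') (tensA S T'') G := ulift_alg (kappa_alg S T'') hbG.
have E : Mmap (iota_alg S T'') (Mmap hg m) = Mmap hG (Mmap (iota_alg S T') m).
  rewrite -(Mmap_comp hg (iota_alg S T'') hbG) //.
  by apply: Mmap_comp => x; rewrite /G (ulift_iota (kappa_alg S T'') hbG).
rewrite /psif E (dw_nat w (kappa_alg S T') (kappa_alg S T'') hG); last first.
  by move=> s; rewrite /G (ulift_kappa (kappa_alg S T'') hbG).
have [[gD gM g1] _] := hg.
have [[GD GM G1] _] := hG.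
move: (dw w _ _) => u.
apply: (@tens_ext R S T' T'' (fun u => tlift (pf j'') (G u)) (fun u => g (tlift (pf j') u))) => /=.
- by rewrite (rh0 (proj1 hG)) tlift0 //; exact: bal_pf.
- by rewrite tlift0 ?(rh0 (proj1 hg)) //; exact: bal_pf.
- by move=> u1 v; rewrite GD tliftD //; exact: bal_pf.
- by move=> u1 v; rewrite tliftD ?gD //; exact: bal_pf.
move=> s t; rewrite -kappa_iota GM /G (ulift_kappa (kappa_alg S T'') hbG) (ulift_iota (kappa_alg S T'') hbG).
rewrite !kappa_iota !tlift_pi; try exact: bal_pf.
by rewrite /ev !big_seq1 /pf /= gM Hc.
Qed.
Definition psi : dualM M Sp :=
  {| dw := psif; dw_lin := psif_lin; dw_nat := psif_nat |}.
End Psi.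
Lemma pi_alg : @alg_hom R Sp (base_alg R) (fun x : trivT hS => x.1).
Proof. by split; [split|]. Qed.

Lemma psiS (w : dualM M S) (m : Mobj M Sp) :
  w_S (psi w) m = ((0, w_R w (Mmap pi_alg m)) : trivT hS).
Proof.
have hstr : @alg_hom R Sp S (fun x : trivT hS => ca_str S x.1) :=
  alg_hom_comp pi_alg (alg_hom_str S).
pose Q := @ulift R S Sp S (fun s => s) (fun x : trivT hS => ca_str S x.1).
have hQ : @alg_hom R (tensA S Sp) S Q := ulift_alg (alg_hom_id S) hstr.
have hS0 := ca_strP S.
rewrite /w_S /= /psif.
rewrite (@tlift_ext _ _ _ _ _ (fun s t => ((0, @ufun R S Sp S (fun s => s) (fun x : trivT hS => ca_str S x.1) s t) : trivT hS))); last first.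
  move=> s t; rewrite /pf /ufun trivE /= mul0r (rh0 hS0) mul0r add0r mulrC.
  by case: t.
rewrite (@tlift_comp _ _ _ _ _ _ (fun x : S => ((0, x) : trivT hS))); last 2 first.
- by [].
- by move=> a b; rewrite trivD /= addr0.
congr (_, _).
rewrite -/(ulift _ _ _) -/Q -(dw_nat w (kappa_alg S Sp) (alg_hom_id S) hQ); last first.
  by move=> s; rewrite /Q (ulift_kappa (alg_hom_id S) hstr).
rewrite /w_R /w_S; congr (dw w _ _).
rewrite -(Mmap_comp (iota_alg S Sp) hQ hstr) ?(Mmap_comp pi_alg (alg_hom_str S) hstr) //.
by move=> x; rewrite /Q (ulift_iota (alg_hom_id S) hstr).
Qed.
Section PartB.
Variables (T : calg R) (j : S -> T) (hj : alg_hom j).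
Definition hT : rmap T T := RMap (rhom_id T).
Definition Te : calg R := @trivA R T T hT (ca_str T) (ca_strP T).
Definition je (x : Sp) : Te := ((ca_str T x.1, j x.2) : trivT hT).
Lemma je_alg : alg_hom je.
Proof.
have [[jD jM j1] jS] := hj; have hT0 := ca_strP T.
split; last by move=> r; rewrite /je /= (rh0 hj.1).
split.
- by move=> [a b] [c d]; rewrite /je trivD /= (rhD hT0) jD.
- move=> [a b] [c d]; rewrite /je !trivE /= (rhM hT0) jD !jM -!jS.
  by rewrite mulrC [j (ca_str S c) * _]mulrC.
- by rewrite /je /= (rh1 hT0) (rh0 hj.1).
Qed.
Definition ee (t : T) : Te := ((t, 0) : trivT hT).
Lemma ee_alg : alg_hom ee.
Proof.
split; last by [].
split.
- by move=> a b; rewrite /ee trivD /= addr0.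
- by move=> a b; rewrite /ee trivE /= !mulr0 addr0.
- by [].
Qed.

Lemma psiT (w : dualM M S) (m0 : Mobj M T) :
  dw (psi w) je_alg (Mmap ee_alg m0) = ((0, dw w hj m0) : trivT hT).
Proof.
have hej : @alg_hom R S Te (fun s => ee (j s)) := alg_hom_comp hj ee_alg.
pose Q2 := @ulift R S Te Te (fun s => ee (j s)) (fun x => x).
have hQ2 : @alg_hom R (tensA S Te) Te Q2 := ulift_alg hej (alg_hom_id Te).
rewrite /= /psif.
rewrite (@tlift_ext _ _ _ _ _ (fun s t => ((0, 1) : trivT hT) * @ufun R S Te Te (fun s => ee (j s)) (fun x => x) s t)); last first.
  move=> s t; rewrite /pf /ufun mulrA; congr (_ * _).
  by rewrite /je /ee trivE /= (rh0 (ca_strP T)) mul0r mulr0 add0r mulr1.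
rewrite (@tlift_comp _ _ _ _ _ (@ufun R S Te Te (fun s => ee (j s)) (fun x => x)) (fun x : Te => ((0, 1) : trivT hT) * x)); last 2 first.
- by rewrite mulr0.
- by move=> a b; rewrite mulrDr.
rewrite -/(ulift _ _ _) -/Q2 -(dw_nat w (kappa_alg S Te) hej hQ2); last first.
  by move=> s; rewrite /Q2 (ulift_kappa hej (alg_hom_id Te)).
rewrite -(Mmap_comp (iota_alg S Te) hQ2 (alg_hom_id Te)); last first.
  by move=> x; rewrite /Q2 (ulift_iota hej (alg_hom_id Te)).
rewrite Mmap_id // (dw_nat w hj hej ee_alg) //.
by rewrite /ee trivE /= mul0r mulr0 add0r mulr1.
Qed.
End PartB.
End Main.

Theorem theorem3p13 (R : comPzRingType) (M : RMod R) :
  dually_separated M <->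
  (forall (S : calg R) (w w' : dualM M S),
     (forall m, w_S w m = w_S w' m) -> dual_eq w w').
Proof.
split.
- move=> H S w w' Hs; apply: H => m; exact: Hs.
- move=> H S w w' Hw T j hj m0.
  have E := H (Sp S) (psi w) (psi w') (fun m => ltac:(by rewrite !psiS Hw)).
  have := E _ _ (je_alg hj) (Mmap (ee_alg T) m0).
  rewrite (psiT hj w) (psiT hj w').
  by case.
Qed.
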